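(* Let $m\ge 4$ and let $b_{\lfloor\log m\rfloor}b_{\lfloor\log m\rfloor-1}\cdots b_1b_0$ be the binary representation of $m$, so $b_{\lfloor\log m\rfloor}=1$. On input $a^m$, $\mathsf{RePair}$ produces the rules $X_1\to aa$, $X_i\to X_{i-1}X_{i-1}$ for $2\le i\le\lfloor\log m\rfloor-1$, and the start rule $$S\to X_{\lfloor\log m\rfloor-1}X_{\lfloor\log m\rfloor-1}f_{\lfloor\log m\rfloor-1}(b_{\lfloor\log m\rfloor-1})\cdots f_1(b_1)f_0(b_0).$$ Here $f_0(1)=a$, $f_0(0)=\varepsilon$, and for $i\ge1$, $f_i(1)=X_i$, $f_i(0)=\varepsilon$. In particular, each $X_i$ derives $a^{2^i}$.
   Context: All logarithms are to base 2. A straight-line program (SLP) is a context-free grammar $\mathbb A=(N,\Sigma,P,S)$ with exactly one production $A\to w$, $w\in(N\cup\Sigma)^+$, per nonterminal $A$, and an acyclic ''occurs-in-right-hand-side'' relation; it derives a single word. For an SLP, a word $\gamma$ over $N\cup\Sigma$ is a maximal string if $|\gamma|\ge2$, $\gamma$ occurs at least twice without overlap in the right-hand sides, and no strictly longer word occurs at least as many times without overlap in the right-hand sides. $\mathsf{RePair}$ on input $w$ starts with the single rule $S\to w$. In each round it selects a maximal string $\gamma$ with the largest number of non-overlapping occurrences, replaces a largest set of pairwise non-overlapping occurrences of $\gamma$ (chosen from left to right) in the right-hand sides by a fresh nonterminal $X$, and adds $X\to\gamma$. It stops when no maximal string exists. *)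

(* Defs.v *)
From HB Require Import structures.
From mathcomp Require Import all_boot.
Set Implicit Arguments. Unset Strict Implicit. Unset Printing Implicit Defensive.

Inductive sym := Ter of nat | Non of nat.

Definition sym_enc (s : sym) : nat + nat :=
  match s with Ter t => inl t | Non x => inr x end.
Definition sym_dec (s : nat + nat) : sym :=
  match s with inl t => Ter t | inr x => Non x end.
Lemma sym_encK : cancel sym_enc sym_dec. Proof. by case. Qed.
HB.instance Definition _ := Equality.copy sym (can_type sym_encK).

(* A grammar produced by RePair: a list of rules (lhs nonterminal, rhs).
   The start nonterminal is 0. *)
Definition rule := (nat * seq sym)%type.
Definition grammar := seq rule.

(* Number of pairwise non-overlapping occurrences of gam in w, chosen
   greedily from left to right (this is the maximum number).  The fuel
   argument n is taken to be size w. *)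
Fixpoint cnt_f (n : nat) (gam w : seq sym) : nat :=
  match n with
  | 0 => 0
  | n'.+1 =>
    match w with
    | [::] => 0
    | _ :: w' =>
      if (gam != [::]) && prefix gam w
      then (cnt_f n' gam (drop (size gam) w)).+1
      else cnt_f n' gam w'
    end
  end.
Definition cnt (gam w : seq sym) : nat := cnt_f (size w) gam w.

Fixpoint repl_f (n : nat) (gam : seq sym) (X : nat) (w : seq sym) : seq sym :=
  match n with
  | 0 => w
  | n'.+1 =>
    match w with
    | [::] => [::]
    | s :: w' =>
      if (gam != [::]) && prefix gam w
      then Non X :: repl_f n' gam X (drop (size gam) w)
      else s :: repl_f n' gam X w'
    end
  end.
Definition repl (gam : seq sym) (X : nat) (w : seq sym) : seq sym :=
  repl_f (size w) gam X w.

Definition occ (g : grammar) (gam : seq sym) : nat :=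
  sumn [seq cnt gam r.2 | r <- g].

Definition maximal (g : grammar) (gam : seq sym) : Prop :=
  [/\ 2 <= size gam, 2 <= occ g gam &
      forall gam' : seq sym, size gam < size gam' -> occ g gam' < occ g gam].

(* One round of RePair (nondeterministic in the tie-breaking and in the
   choice of the fresh nonterminal name). *)
Definition repair_step (g g' : grammar) : Prop :=
  exists (gam : seq sym) (X : nat),
    [/\ maximal g gam,
        (forall gam', maximal g gam' -> occ g gam' <= occ g gam),
        X != 0, X \notin [seq r.1 | r <- g] &
        g' = [seq (r.1, repl gam X r.2) | r <- g] ++ [:: (X, gam)]].

Inductive repair_reach : grammar -> grammar -> Prop :=
| rr_refl g : repair_reach g g
| rr_step g g' g'' : repair_step g g' -> repair_reach g' g'' -> repair_reach g g''.

Definition repair_output (w : seq nat) (g : grammar) : Prop :=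
  repair_reach [:: (0, map Ter w)] g /\ ~ (exists gam, maximal g gam).

Fixpoint expand (g : grammar) (n : nat) (s : sym) : seq nat :=
  match s with
  | Ter t => [:: t]
  | Non x =>
    match n with
    | 0 => [::]
    | n'.+1 =>
      match [seq r.2 | r <- g & r.1 == x] with
      | rhs :: _ => flatten [seq expand g n' s' | s' <- rhs]
      | [::] => [::]
      end
    end
  end.

Definition fbit (a : nat) (X : nat -> nat) (i : nat) (b : bool) : seq sym :=
  if b then (if i == 0 then [:: Ter a] else [:: Non (X i)]) else [::].

Definition bit (m i : nat) : bool := odd (m %/ 2 ^ i).

Definition start_rhs (a m : nat) (X : nat -> nat) : seq sym :=
  let L := trunc_log 2 m in
  [:: Non (X L.-1); Non (X L.-1)] ++
  flatten [seq fbit a X i (bit m i) | i <- rev (iota 0 L)].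

Definition expected_grammar (a m : nat) (X : nat -> nat) : grammar :=
  let L := trunc_log 2 m in
  (0, start_rhs a m X) :: (X 1, [:: Ter a; Ter a]) ::
  [seq (X i, [:: Non (X i.-1); Non (X i.-1)]) | i <- iota 2 (L - 2)].

(* Main.v *)
Require Import Defs.
From mathcomp Require Import all_boot.
From mathcomp Require Import zify.

Lemma size_drop_lt (gam w : seq sym) s : gam != [::] -> size (drop (size gam) (s :: w)) <= size w.
Proof. by case: gam => //= x g _; rewrite size_drop /= leq_subr. Qed.
Arguments size_drop_lt {gam} w s.

Lemma cnt_fuel gam : forall n n' w, size w <= n -> size w <= n' ->
  cnt_f n gam w = cnt_f n' gam w.
Proof.
elim=> [|n IH] [|n'] [|s w] //= h1 h2.
case: ifP=> [/andP [g0 _]|_]; last by rewrite (IH n').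
have := size_drop_lt w s g0 => h.
by rewrite (IH n') //; apply: leq_trans h _.
Qed.

Lemma repl_fuel gam X : forall n n' w, size w <= n -> size w <= n' ->
  repl_f n gam X w = repl_f n' gam X w.
Proof.
elim=> [|n IH] [|n'] [|s w] //= h1 h2.
case: ifP=> [/andP [g0 _]|_]; last by rewrite (IH n').
have := size_drop_lt w s g0 => h.
by rewrite (IH n') //; apply: leq_trans h _.
Qed.

Lemma cnt_nil gam : cnt gam [::] = 0. Proof. by []. Qed.
Lemma cnt_cons gam s w : cnt gam (s :: w) =
  if (gam != [::]) && prefix gam (s :: w) then (cnt gam (drop (size gam) (s :: w))).+1
  else cnt gam w.
Proof.
rewrite /cnt /=; case: ifP=> [/andP [g0 _]|//].
by rewrite (cnt_fuel _ _ _ _ (size_drop_lt w s g0) (leqnn _)).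
Qed.
Lemma repl_nil gam X : repl gam X [::] = [::]. Proof. by []. Qed.
Lemma repl_cons gam X s w : repl gam X (s :: w) =
  if (gam != [::]) && prefix gam (s :: w) then Non X :: repl gam X (drop (size gam) (s :: w))
  else s :: repl gam X w.
Proof.
rewrite /repl /=; case: ifP=> [/andP [g0 _]|//].
by rewrite (repl_fuel _ _ _ _ _ (size_drop_lt w s g0) (leqnn _)).
Qed.

Lemma cnt_count gam s : forall w, cnt gam w * count_mem s gam <= count_mem s w.
Proof.
move=> w; elim: {w}(size w) {-2}w (leqnn (size w)) => [|n IH] [|x w] // hw.
rewrite cnt_cons; case: ifP=> [/andP [g0 /prefixP [w' ew]]|_].
  have h := size_drop_lt w x g0.
  rewrite ew drop_size_cat // count_cat mulSn leq_add2l IH //.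
  move: h; rewrite ew drop_size_cat // => h.
  exact: leq_trans h hw.
by apply: leq_trans (IH _ hw) _; rewrite /= leq_addl.
Qed.

Lemma cnt_notin y g' w : y \notin w -> cnt (y :: g') w = 0.
Proof.
elim: w => [|x w IH] //; rewrite inE negb_or => /andP [yx yw].
rewrite cnt_cons /= (negbTE yx) /=; exact: IH.
Qed.

Lemma repl_notin y g' X w : y \notin w -> repl (y :: g') X w = w.
Proof.
elim: w => [|x w IH] //; rewrite inE negb_or => /andP [yx yw].
rewrite repl_cons /= (negbTE yx) /= IH //.
Qed.

Lemma prefix_nseq (y : sym) (t : seq sym) j : forall q, y \notin t -> 0 < j ->
  prefix (nseq j y) (nseq q y ++ t) = (j <= q).
Proof.
elim: j => [|j IH] [|q] //= yt _.
  by move: yt; case: (t) => [|z t'] //=; rewrite inE negb_or eq_sym => /andP [/negbTE -> _].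
rewrite eqxx /=; case: j IH => [|j] IH; first by case: (nseq q y ++ t).
by rewrite IH.
Qed.

Lemma cnt_nseq (y : sym) (t : seq sym) j : y \notin t -> 0 < j -> forall q,
  cnt (nseq j y) (nseq q y ++ t) = q %/ j.
Proof.
case: j => // j yt _ q; elim: q {-2}q (leqnn q) => [|n IH] [|q] hq.
- by rewrite cnt_notin.
- by [].
- by rewrite cnt_notin.
rewrite [nseq q.+1 y ++ t]/= cnt_cons.
have e : y :: nseq q y ++ t = nseq q.+1 y ++ t by [].
have ne : (nseq j.+1 y != [::]) = true by [].
rewrite e ne prefix_nseq //.
case: (leqP j.+1 q.+1) => hj; rewrite andTb.
  rewrite size_nseq.
  have -> : nseq q.+1 y ++ t = nseq j.+1 y ++ (nseq (q.+1 - j.+1) y ++ t).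
    by rewrite catA -nseqD subnKC.
  rewrite drop_size_cat ?size_nseq // IH; last by rewrite subSS; apply: leq_trans (leq_subr _ _) _.
  have {2}-> : q.+1 = 1 * j.+1 + (q.+1 - j.+1) by rewrite mul1n subnKC.
  by rewrite divnMDl.
rewrite IH // !divn_small //.
by apply: leq_ltn_trans hj.
Qed.

Lemma repl_nseq (y : sym) (t : seq sym) X : y \notin t -> forall q,
  repl [:: y; y] X (nseq q y ++ t) = nseq q./2 (Non X) ++ nseq (odd q) y ++ t.
Proof.
move=> yt q.
suff : forall q, (repl [:: y; y] X (nseq q y ++ t) = nseq q./2 (Non X) ++ nseq (odd q) y ++ t)
  /\ (repl [:: y; y] X (nseq q.+1 y ++ t) = nseq q.+1./2 (Non X) ++ nseq (odd q.+1) y ++ t).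
  by case/(_ q).
elim=> [|n [IH IH1]].
  split; first by rewrite /= repl_notin.
  have e : nseq 1 y ++ t = y :: t by [].
  rewrite e repl_cons.
  have -> : prefix [:: y; y] (y :: t) = false by rewrite -e (prefix_nseq y t 2 1).
  by rewrite andbF repl_notin.
split=> //.
have e : nseq n.+2 y ++ t = y :: (y :: nseq n y ++ t) by [].
rewrite e repl_cons -e.
have -> : prefix [:: y; y] (nseq n.+2 y ++ t) = true by rewrite (prefix_nseq y t 2).
by rewrite andTb e /= drop0 IH negbK.
Qed.

Set Implicit Arguments. Unset Strict Implicit. Unset Printing Implicit Defensive.

Definition Y (a : nat) (X : nat -> nat) (i : nat) : sym := if i == 0 then Ter a else Non (X i).
Definition rhs a X i : seq sym := [:: Y a X i.-1; Y a X i.-1].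
Definition tl a m X k : seq sym := [seq Y a X i | i <- rev (iota 0 k) & bit m i].
Definition St a m X k : seq sym := nseq (m %/ 2 ^ k) (Y a X k) ++ tl a m X k.
Definition G a m X k : grammar := (0, St a m X k) :: [seq (X i, rhs a X i) | i <- iota 1 k].
Definition good (X : nat -> nat) k :=
  (forall i, 1 <= i <= k -> X i != 0) /\ {in [pred i | 1 <= i <= k] &, injective X}.

Lemma Y_inj a X k i j : good X k -> i <= k -> j <= k -> Y a X i = Y a X j -> i = j.
Proof.
move=> [_ hinj] hi hj; rewrite /Y.
case: (i =P 0) => [->|/eqP i0]; case: (j =P 0) => [->|/eqP j0] //.
case=> e; apply: hinj => //; rewrite inE /= ?lt0n ?i0 ?j0 //.
Qed.

Lemma tl_mem a m X k s : s \in tl a m X k -> exists2 i, i < k & s = Y a X i.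
Proof.
case/mapP=> i; rewrite mem_filter mem_rev mem_iota add0n => /andP [_ /andP [_ ik]] ->.
by exists i.
Qed.

Lemma tl_uniq a m X k : good X k -> uniq (tl a m X k).
Proof.
move=> gX; rewrite map_inj_in_uniq ?filter_uniq ?rev_uniq ?iota_uniq //.
move=> i j; rewrite !mem_filter !mem_rev !mem_iota !add0n => /andP [_ /andP [_ ik]] /andP [_ /andP [_ jk]].
by apply: (Y_inj gX); apply: ltnW.
Qed.

Lemma Yk_notin_tl a m X k : good X k -> Y a X k \notin tl a m X k.
Proof.
move=> gX; apply/negP => /tl_mem [i ik e].
by have := Y_inj gX (leqnn k) (ltnW ik) e => ek; rewrite ek ltnn in ik.
Qed.

Lemma count_St a m X k s : good X k -> s != Y a X k -> count_mem s (St a m X k) <= 1.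
Proof.
move=> gX sY; rewrite /St count_cat count_nseq /= eq_sym (negbTE sY) mul0n add0n.
by rewrite count_uniq_mem ?tl_uniq // leq_b1.
Qed.

Lemma cnt_count1 gam w : 0 < cnt gam w -> forall s, count_mem s gam <= count_mem s w.
Proof.
move=> c0 s; apply: leq_trans (cnt_count gam s w); rewrite -{1}(mul1n (count_mem s gam)).
by rewrite leq_mul2r c0 orbT.
Qed.

Lemma all_eq_nseq (gam : seq sym) y : (forall s, s \in gam -> s = y) -> gam = nseq (size gam) y.
Proof. by move=> h; apply/all_pred1P/allP => s /h ->; rewrite /= eqxx. Qed.

Lemma cnt_pair gam (y : sym) : 2 <= size gam -> cnt gam [:: y; y] = (gam == [:: y; y]).
Proof.
move=> hs; case: eqP => [->|ne].
  have h : cnt (nseq 2 y) (nseq 2 y ++ [::]) = 2 %/ 2 by apply: cnt_nseq.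
  exact: h.
case: (posnP (cnt gam [:: y; y])) => // c0; exfalso; apply: ne.
have hc := cnt_count1 c0.
have e : gam = nseq (size gam) y.
  apply: all_eq_nseq => s sg; apply/eqP; apply: contraLR sg => sy.
  have := hc s; rewrite /= eq_sym (negbTE sy) /= => h.
  by rewrite -has_pred1 has_count -leqNgt.
have yy : (y == y) = true := eqxx y.
have := hc y; rewrite {1}e count_nseq /= yy mul1n => h.
by rewrite e; case: (size gam) hs h => [|[|[|n]]].
Qed.

Definition R a X k := [seq rhs a X i | i <- iota 1 k].

Lemma R_uniq a X k : good X k -> uniq (R a X k).
Proof.
move=> gX; rewrite map_inj_in_uniq ?iota_uniq // => i j.
rewrite !mem_iota => /andP [i1 ik] /andP [j1 jk] [e _].
have hi : i.-1 <= k by lia.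
have hj : j.-1 <= k by lia.
have := Y_inj gX hi hj e; lia.
Qed.

Lemma occ_G a m X k gam : 2 <= size gam ->
  occ (G a m X k) gam = cnt gam (St a m X k) + count_mem gam (R a X k).
Proof.
move=> hs; rewrite /occ /G /= -map_comp /R count_map -sumn_count.
congr (_ + sumn _); apply: eq_map => i /=; rewrite /rhs cnt_pair //; exact: (congr1 nat_of_bool (eq_sym _ _)).
Qed.

Lemma R_mem a X k gam : gam \in R a X k -> exists2 i, i < k & gam = [:: Y a X i; Y a X i].
Proof.
case/mapP=> i; rewrite mem_iota => /andP [i1 ik] ->; exists i.-1 => //.
by rewrite -ltnS prednK.
Qed.

Lemma Yneq a X k i : good X k -> i < k -> Y a X i != Y a X k.
Proof.
move=> gX ik; apply/negP => /eqP e; have := Y_inj gX (ltnW ik) (leqnn k) e.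
by move=> ei; rewrite ei ltnn in ik.
Qed.

Lemma classify a m X k gam : good X k -> 2 <= size gam -> 2 <= occ (G a m X k) gam ->
  gam = nseq (size gam) (Y a X k).
Proof.
move=> gX hs; rewrite occ_G // count_uniq_mem ?R_uniq //.
case: (leqP 2 (cnt gam (St a m X k))) => hc ho.
  apply: all_eq_nseq => s sg; apply/eqP; apply/negPn/negP => sY.
  have h1 := count_St m gX sY.
  have h2 := cnt_count gam s (St a m X k).
  have c1 : 0 < count_mem s gam by rewrite -has_count has_pred1.
  have := leq_mul hc c1; lia.
have gR : gam \in R a X k by move: ho; case: (gam \in R a X k) => //=; lia.
have c1 : 0 < cnt gam (St a m X k) by move: ho; rewrite gR /=; lia.
case/R_mem: gR => i ik e.
have := cnt_count1 c1 (Y a X i); rewrite {1}e.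
have := count_St m gX (Yneq a gX ik).
have yy : (Y a X i == Y a X i) = true := eqxx _.
rewrite /= yy; lia.
Qed.

Lemma occ_nseq a m X k j : good X k -> 2 <= j ->
  occ (G a m X k) (nseq j (Y a X k)) = (m %/ 2 ^ k) %/ j.
Proof.
move=> gX hj; rewrite occ_G ?size_nseq // count_uniq_mem ?R_uniq //.
have -> : nseq j (Y a X k) \in R a X k = false.
  apply/negP => /R_mem [i ik]; case: j hj => [|[|j]] // _ [e _].
  by have := Yneq a gX ik; rewrite e eqxx.
rewrite addn0 /St cnt_nseq //; [exact: Yk_notin_tl | lia].
Qed.

Lemma div_lt q j : 4 <= q -> 3 <= j -> q %/ j < q %/ 2.
Proof.
move=> hq hj; apply: leq_ltn_trans (leq_div2l q (isT : 0 < 3) hj) _; lia.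
Qed.

Lemma no_max a m X k gam : good X k -> m %/ 2 ^ k < 4 -> ~ maximal (G a m X k) gam.
Proof.
move=> gX hq [hs ho _]; have e := classify gX hs ho.
move: ho; rewrite e occ_nseq ?size_nseq //.
have := leq_div2l (m %/ 2 ^ k) (isT : 0 < 2) hs; lia.
Qed.

Lemma pair_max a m X k : good X k -> 4 <= m %/ 2 ^ k -> maximal (G a m X k) [:: Y a X k; Y a X k].
Proof.
move=> gX hq; have e2 : [:: Y a X k; Y a X k] = nseq 2 (Y a X k) by [].
split => //; rewrite e2 occ_nseq //; first lia.
move=> g' hs; rewrite size_nseq in hs.
case: (ltnP (occ (G a m X k) g') 2) => ho; first lia.
rewrite (classify gX _ ho) ?occ_nseq //; try lia.
exact: div_lt.
Qed.

Lemma pick a m X k gam : good X k -> 4 <= m %/ 2 ^ k -> maximal (G a m X k) gam ->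
  occ (G a m X k) [:: Y a X k; Y a X k] <= occ (G a m X k) gam -> gam = [:: Y a X k; Y a X k].
Proof.
move=> gX hq [hs ho _]; have e := classify gX hs ho.
have e2 : [:: Y a X k; Y a X k] = nseq 2 (Y a X k) by [].
rewrite e2 e !occ_nseq //.
case: (ltnP 2 (size gam)) => hj; first by have := div_lt hq hj; lia.
have -> : size gam = 2 by lia.
by [].
Qed.

Definition ext (X : nat -> nat) k Xn := fun i => if i == k.+1 then Xn else X i.

Lemma Y_ext a X k Xn i : i <= k -> Y a (ext X k Xn) i = Y a X i.
Proof.
move=> ik; rewrite /Y /ext; case: ifP => // _.
by have -> : (i == k.+1) = false by apply/negbTE; rewrite neq_ltn ltnS ik.
Qed.

Lemma tl_ext a m X k Xn : tl a m (ext X k Xn) k = tl a m X k.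
Proof.
rewrite /tl; apply/eq_in_map => i; rewrite mem_filter mem_rev mem_iota => /and3P [_ _ ik].
by apply: Y_ext; apply: ltnW.
Qed.

Lemma tl_S a m X k : tl a m X k.+1 = (if bit m k then [:: Y a X k] else [::]) ++ tl a m X k.
Proof.
by rewrite /tl -addn1 iotaD rev_cat /= add0n; case: (bit m k).
Qed.

Lemma div_S m k : m %/ 2 ^ k.+1 = (m %/ 2 ^ k)./2.
Proof. by rewrite expnSr divnMA divn2. Qed.

Lemma St_step a m X k Xn : good X k ->
  repl [:: Y a X k; Y a X k] Xn (St a m X k) = St a m (ext X k Xn) k.+1.
Proof.
move=> gX; rewrite /St repl_nseq; last exact: Yk_notin_tl.
have -> : Y a (ext X k Xn) k.+1 = Non Xn by rewrite /Y /ext eqxx.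
rewrite tl_S tl_ext div_S Y_ext //.
by rewrite /bit; case: (odd _).
Qed.

Lemma good_ext X k Xn : good X k -> Xn != 0 -> (forall i, 1 <= i <= k -> Xn != X i) ->
  good (ext X k Xn) k.+1.
Proof.
move=> [h0 hi] n0 hn; split.
  move=> i /andP [i1 ik]; rewrite /ext; case: ifP => [_|/negbT ne] //.
  apply: h0; rewrite i1 /=; move: ik ne; rewrite leq_eqVlt => /orP [/eqP -> | ]; [by rewrite eqxx | by []].
move=> i j; rewrite !inE /ext => /andP [i1 ik] /andP [j1 jk].
case: eqP => [->|/eqP ni]; case: eqP => [->|/eqP nj] //.
- move=> e; have jk' : j <= k by move: jk nj; rewrite leq_eqVlt => /orP [/eqP -> |]; rewrite ?eqxx.
  by have := hn j; rewrite j1 jk' e eqxx => /(_ isT).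
- move=> e; have ik' : i <= k by move: ik ni; rewrite leq_eqVlt => /orP [/eqP -> |]; rewrite ?eqxx.
  by have := hn i; rewrite i1 ik' -e eqxx => /(_ isT).
have jk' : j <= k by move: jk nj; rewrite leq_eqVlt => /orP [/eqP -> |]; rewrite ?eqxx.
have ik' : i <= k by move: ik ni; rewrite leq_eqVlt => /orP [/eqP -> |]; rewrite ?eqxx.
by move=> e; apply: hi => //; rewrite inE ?i1 ?j1 /=.
Qed.

Lemma step a m X k g' : good X k -> 4 <= m %/ 2 ^ k -> repair_step (G a m X k) g' ->
  exists Xn, good (ext X k Xn) k.+1 /\ g' = G a m (ext X k Xn) k.+1.
Proof.
move=> gX hq [gam [Xn [hmax hbest n0 fresh ->]]].
have egam := pick gX hq hmax (hbest _ (@pair_max a m X k gX hq)).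
exists Xn; split.
  apply: good_ext => // i hi; apply: contra fresh => /eqP ->.
  rewrite /G /= -map_comp inE; apply/orP; right; apply/mapP; exists i => //.
  rewrite mem_iota; lia.
rewrite /G; have -> : iota 1 k.+1 = iota 1 k ++ [:: k.+1] by rewrite -(addn1 k) iotaD add1n addn1.
rewrite egam map_cat /= St_step // -map_comp; congr (_ :: _ ++ _).
  apply/eq_in_map => i; rewrite mem_iota => /andP [i1 ik] /=.
  have ne : (i == k.+1) = false by apply/negbTE; rewrite neq_ltn; apply/orP; left; lia.
  rewrite /ext ne /rhs Y_ext; last lia.
  rewrite repl_notin // !inE negb_or; have := Yneq a gX (_ : i.-1 < k).
  by move=> /(_ ltac:(lia)); rewrite eq_sym => ->.
by rewrite /ext eqxx /rhs /= Y_ext.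
Qed.

Lemma lookup a m X k j : good X k -> 1 <= j <= k ->
  [seq r.2 | r <- G a m X k & r.1 == X j] = [:: rhs a X j].
Proof.
move=> [h0 hi] hj; rewrite /G /=.
have -> : (0 == X j) = false by apply/negbTE; rewrite eq_sym h0.
rewrite filter_map -map_comp.
have -> : [seq i <- iota 1 k | preim (fun i => (X i, rhs a X i)) (fun r => r.1 == X j) i]
          = [seq i <- iota 1 k | pred1 j i].
  apply/eq_in_filter => i; rewrite mem_iota => hi' /=.
  apply/eqP/eqP => [e|->] //; apply: hi => //; rewrite inE; lia.
by rewrite filter_pred1_uniq ?iota_uniq // mem_iota; lia.
Qed.

Lemma expandY a m X k i : good X k -> i <= k -> expand (G a m X k) i (Y a X i) = nseq (2 ^ i) a.
Proof.
move=> gX; elim: i => [|i IH] hi; first by [].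
rewrite {1}/Y /= (@lookup a m X k i.+1 gX) ?IH /=; try lia.
by rewrite IH ?cats0 -?nseqD ?expnS ?mul2n ?addnn //; lia.
Qed.

Lemma fbit_tl a m X s : flatten [seq fbit a X i (bit m i) | i <- s] = [seq Y a X i | i <- s & bit m i].
Proof.
elim: s => [|i s IH] //=; rewrite /fbit {}IH /Y; case: (bit m i) => //=; by case: (i == 0).
Qed.

Lemma L_ge2 m : 4 <= m -> 2 <= trunc_log 2 m.
Proof. by move=> h; apply: trunc_log_max. Qed.

Lemma F1 m k : 4 <= m -> k < (trunc_log 2 m).-1 -> 4 <= m %/ 2 ^ k.
Proof.
move=> hm hk; rewrite leq_divRL ?expn_gt0 //.
have h1 : 2 ^ k.+2 <= 2 ^ trunc_log 2 m by apply: leq_pexp2l => //; lia.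
have h2 : 2 ^ trunc_log 2 m <= m by apply: trunc_logP; lia.
by apply: leq_trans h2; apply: leq_trans h1; rewrite !expnS mulnA mulnC.
Qed.

Lemma F2 m : 4 <= m -> 2 <= m %/ 2 ^ (trunc_log 2 m).-1 < 4.
Proof.
move=> hm; have hL := L_ge2 hm.
have h2 : 2 ^ trunc_log 2 m <= m by apply: trunc_logP; lia.
have h3 := @trunc_log_ltn 2 m isT.
have e : trunc_log 2 m = ((trunc_log 2 m).-1).+1 by lia.
rewrite e in h2 h3; rewrite leq_divRL ?ltn_divLR ?expn_gt0 //.
by move: h2 h3; rewrite !expnS mulnA => -> ->.
Qed.

Lemma main_ind a m g g'' : 4 <= m -> repair_reach g g'' -> forall X k, g = G a m X k -> good X k ->
  k <= (trunc_log 2 m).-1 -> ~ (exists gam, maximal g'' gam) ->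
  exists X', good X' (trunc_log 2 m).-1 /\ g'' = G a m X' (trunc_log 2 m).-1.
Proof.
move=> hm; elim=> [g0|g0 g1 g2 hs _ IH] X k e gX hk hno; subst g0.
  case: (ltnP k (trunc_log 2 m).-1) => hk'.
    by exfalso; apply: hno; exists [:: Y a X k; Y a X k]; apply: pair_max => //; apply: F1.
  have ek : k = (trunc_log 2 m).-1 by lia.
  by exists X; rewrite -ek.
case: (ltnP k (trunc_log 2 m).-1) => hk'.
  have [Xn [gX' e1]] := step gX (F1 hm hk') hs.
  by apply: (IH (ext X k Xn) k.+1).
exfalso; have ek : k = (trunc_log 2 m).-1 by lia.
case: hs => gam [Xn [hmax _ _ _ _]].
apply: (no_max gX _ hmax); rewrite ek; have := F2 hm; lia.
Qed.

Lemma G_expected a m X : 4 <= m -> G a m X (trunc_log 2 m).-1 = expected_grammar a m X.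
Proof.
move=> hm; have hL := L_ge2 hm; have hq := F2 hm.
rewrite /G /expected_grammar /start_rhs fbit_tl.
set L := trunc_log 2 m in hL hq *.
have YL : Y a X L.-1 = Non (X L.-1) by rewrite /Y ifN //; lia.
congr (( _, _) :: _).
  have -> : [seq Y a X i | i <- rev (iota 0 L) & bit m i] = tl a m X L.-1.+1 by rewrite prednK //; lia.
  rewrite tl_S /St YL /bit; move: hq.
  by case: (m %/ 2 ^ L.-1) => [|[|[|[|q]]]].
have -> : L.-1 = (L - 2).+1 by lia.
rewrite /=; congr (_ :: _); apply/eq_in_map => i; rewrite mem_iota => hi /=.
by rewrite /rhs /Y ifN //; lia.
Qed.

Unset Implicit Arguments.

Theorem mainTheorem2 (m a : nat) (g : grammar) :
  4 <= m -> repair_output (nseq m a) g ->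
  exists X : nat -> nat,
    [/\ (forall i, 1 <= i <= (trunc_log 2 m).-1 -> X i != 0),
        {in [pred i | 1 <= i <= (trunc_log 2 m).-1] &, injective X},
        perm_eq g (expected_grammar a m X) &
        (forall i, 1 <= i <= (trunc_log 2 m).-1 ->
           expand g i (Non (X i)) = nseq (2 ^ i) a)].
Proof.
move=> hm [hr hno].
have init : [:: (0, map Ter (nseq m a))] = G a m (fun _ => 0) 0.
  by rewrite /G /St /tl /= expn0 divn1 map_nseq cats0.
have g0 : good (fun _ => 0) 0 by split => [i|i j]; rewrite ?inE; lia.
have [X [gX ->]] := main_ind hm hr init g0 (leq0n _) hno.
exists X; have [h0 hi] := gX; split => //.
  by rewrite G_expected.
move=> i hi'; have := @expandY a m X _ i gX (_ : i <= (trunc_log 2 m).-1).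
rewrite /Y ifN; last lia.
by apply; lia.
Qed.
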